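(* Let $G=(V,E)$ be an undirected, unweighted, 2-edge-connected graph and let $T$ be a spanning tree of $G$. Fix an edge $e$ of $T$, and let $X$ and $Y=V\setminus X$ be the vertex sets of the two connected components of $T-e$. Let $S_e$ be the set of swap edges of $e$; write every $g\in S_e$ as $g=(a,b)$ with $a\in X$, $b\in Y$. For $x\in X$ and $g=(a,b),g'=(a',b')\in S_e$ (not necessarily distinct) put $$\phi_x(g,g') := d_T(x,a)+d_T(b,b')+d_T(a',x).$$ For every $x\in X$ fix a pair $(g_x,g'_x)\in \arg\max_{(g,g')\in S_e\times S_e}\phi_x(g,g')$, and write $g_x=(a_x,b_x)$, $g'_x=(a'_x,b'_x)$ with $a_x,a'_x\in X$ and $b_x,b'_x\in Y$. Let $T_X$ be the subtree of $T$ induced by $X$, and for an edge $e'=(u,v)$ of $T_X$ let $U(e',u)$ and $U(e',v)$ denote the vertex sets of the connected components of $T_X-e'$ containing $u$ and $v$, respectively. Let $e'=(x,z)$ be an edge of $T_X$ such that $\phi_z(g_x,g'_x)<\phi_z(g_z,g'_z)$. Then at least one of the following holds: (i) $a_z,a'_z\in U(e',x)$ and $\{a_x,a'_x\}\cap U(e',z)\neq\emptyset$; (ii) $a_x,a'_x\in U(e',z)$ and $\{a_z,a'_z\}\cap U(e',x)\neq\emptyset$.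
   Context: $d_T(u,v)$ denotes the number of edges on the unique path between $u$ and $v$ in the tree $T$. For an edge $e$ of $T$, the set $S_e$ of swap edges of $e$ consists of all edges of $E\setminus\{e\}$ whose endpoints lie in different connected components of $T-e$. *)

(* Defs.v *)
From mathcomp Require Import all_boot.
Set Implicit Arguments. Unset Strict Implicit. Unset Printing Implicit Defensive.

Section Graphs.
Variable V : finType.

Definition remove_edge (r : rel V) (a b : V) : rel V :=
  fun u v => r u v && ~~ (((u == a) && (v == b)) || ((u == b) && (v == a))).

Definition simple_graph (r : rel V) : Prop :=
  symmetric r /\ irreflexive r.

Definition connected (r : rel V) : Prop := forall u v, connect r u v.

Definition two_edge_connected (G : rel V) : Prop :=
  connected G /\ forall a b, G a b -> connected (remove_edge G a b).

Definition acyclic (r : rel V) : Prop :=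
  forall c : seq V, uniq c -> 2 < size c -> ~~ cycle r c.

Definition spanning_tree (G T : rel V) : Prop :=
  symmetric T /\ subrel T G /\ connected T /\ acyclic T.

(* d_T(u,v): number of edges of a shortest walk from u to v in T (in a tree
   this is the number of edges of the unique path) *)
Definition dist (T : rel V) (u v : V) : nat :=
  find (fun n => [exists p : n.-tuple V, path T u p && (last u p == v)])
       (iota 0 #|V|).

Definition compX (T : rel V) (p q : V) : {set V} :=
  [set w | connect (remove_edge T p q) p w].

(* swap edges of e = (p,q), oriented as (a,b) with a in X, b in Y = V \ X *)
Definition is_swap (G T : rel V) (p q : V) (g : V * V) : bool :=
  [&& G g.1 g.2, g.1 \in compX T p q, g.2 \notin compX T p q
    & ~~ (((g.1 == p) && (g.2 == q)) || ((g.1 == q) && (g.2 == p)))].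

Definition phi (T : rel V) (x : V) (g g' : V * V) : nat :=
  dist T x g.1 + dist T g.2 g'.2 + dist T g'.1 x.

Definition subtree (T : rel V) (X : {set V}) : rel V :=
  fun u v => [&& T u v, u \in X & v \in X].

Definition compU (T : rel V) (X : {set V}) (u v : V) : {set V} :=
  [set w in X | connect (remove_edge (subtree T X) u v) u w].

End Graphs.

(* Main.v *)
Require Import Defs.
From mathcomp Require Import all_boot zify.
Set Implicit Arguments. Unset Strict Implicit.

Section H.
Variable V : finType.
Variable T : rel V.

Lemma dist_le u p : path T u p -> dist T u (last u p) <= size p.
Proof.
move=> hp; rewrite /dist.
set P := (fun n => _).
case: (ltnP (size p) #|V|) => h; last first.
  by apply: leq_trans (find_size _ _) _; rewrite size_iota.
rewrite leqNgt; apply/negP => /(before_find 0).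
rewrite nth_iota // add0n => H; suff : P (size p) by rewrite H.
rewrite /P; apply/existsP; exists (in_tuple p); by rewrite /= hp eqxx.
Qed.

Lemma dist_ex u v : connect T u v ->
  exists p, [/\ path T u p, last u p = v & size p = dist T u v].
Proof.
case/connectP => p hp ->; case: (shortenP hp) => p' hp' hu _.
have hs : size p' < #|V|.
  have := max_card (mem (u :: p')). by rewrite (card_uniqP hu).
have hd := dist_le hp'.
have hf : has (fun n => [exists t : n.-tuple V, path T u t && (last u t == last u p')]) (iota 0 #|V|).
  by rewrite has_find size_iota; apply: leq_ltn_trans hd hs.
move: (nth_find 0 hf); rewrite -/(dist T u (last u p')) nth_iota; last first.
  by move: hf; rewrite has_find size_iota.
rewrite add0n => /existsP [t /andP [ht /eqP hl]].
by exists t; rewrite size_tuple.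
Qed.

Hypothesis symT : symmetric T.

Lemma rev_walk u p : path T u p -> exists p',
  [/\ path T (last u p) p', last (last u p) p' = u & size p' = size p].
Proof.
elim: p u => [|w p IH] u /=; first by exists [::].
case/andP => huw hp; case: (IH w hp) => q [hq hl hs].
exists (rcons q u); rewrite rcons_path hq hl last_rcons size_rcons hs symT huw.
by [].
Qed.

Lemma dist_sym u v : connect T u v -> connect T v u -> dist T u v = dist T v u.
Proof.
move=> huv hvu.
case: (dist_ex huv) => p [hp hl hs]; case: (rev_walk hp) => q [hq hl' hs'].
case: (dist_ex hvu) => p2 [hp2 hl2 hs2]; case: (rev_walk hp2) => q2 [hq2 hl2' hs2'].
have h1 := dist_le hq; rewrite hl' hs' in h1; rewrite hl in h1.
have h2 := dist_le hq2; rewrite hl2' hs2' in h2; rewrite hl2 in h2.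
lia.
Qed.

Lemma remove_edge_sym x z : symmetric (remove_edge T x z).
Proof.
move=> u v; rewrite /remove_edge symT.
by case: (u == x); case: (v == z); case: (u == z); case: (v == x); rewrite /= ?andbT ?andbF.
Qed.

Lemma walk_through x z p u : path T u p ->
  connect (remove_edge T x z) x (last u p) -> ~~ connect (remove_edge T x z) x u ->
  exists q, [/\ path T x q, last x q = last u p & size q < size p].
Proof.
elim: p u => [|v p IH] u /=; first by move=> _ ->.
case/andP => huv hp hc hn.
case hv: (connect (remove_edge T x z) x v); last first.
  case: (IH v hp hc (negbT hv)) => q [hq hl hs]; exists q; split => //.
  exact: ltnW.
case hR: (remove_edge T x z u v).
  move: hn; rewrite (connect_trans hv) //; apply: connect1.
  by rewrite remove_edge_sym.
move: hR; rewrite /remove_edge huv /= => /negbFE.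
case/orP => /andP [/eqP eu /eqP ev].
  by move: hn; rewrite eu connect0.
by exists p; rewrite -ev hp.
Qed.

Lemma dist_side x z a : connect T x a -> connect T z a -> T z x ->
  connect (remove_edge T x z) x a -> ~~ connect (remove_edge T x z) x z ->
  dist T z a = (dist T x a).+1.
Proof.
move=> hxa hza hzx hc hn.
case: (dist_ex hza) => p [hp hl hs].
rewrite -hl in hc; have [q [hq hql hqs]] := walk_through hp hc hn.
have h1 := dist_le hq; rewrite hql hl in h1.
case: (dist_ex hxa) => p2 [hp2 hl2 hs2].
have : path T z (x :: p2) by rewrite /= hzx hp2.
move/dist_le; rewrite /= hl2 hs2 => h2.
lia.
Qed.

End H.


Section H2.
Variable V : finType.

Lemma no_cycle (T : rel V) x z : acyclic T -> T z x -> x != z ->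
  ~~ connect (remove_edge T x z) x z.
Proof.
move=> hac hzx hxz; apply/negP => /connectP [p hp hl].
move: hl; case: (shortenP hp) => p' hp' hu _ hl.
have hpT : path T x p'.
  by apply: sub_path hp' => u v /andP [].
case: p' hl hp' hu hpT => [|v p'] /= hl; first by move: hxz; rewrite hl eqxx.
case/andP => hxv _ hu hpT.
case: p' hl hxv hu hpT => [|w p'] /= hl hxv hu hpT.
  by move: hxv; rewrite -hl /remove_edge /= !eqxx andbF.
have := hac [:: x, v, w & p'] hu; rewrite /= ltnS /=.
move/(_ isT)/negP; apply; rewrite rcons_path -hl hzx andbT.
by case/and3P: hpT => -> -> ->.
Qed.

Lemma comp_walk (S : rel V) x z u p : path S u p ->
  connect (remove_edge S x z) x u || connect (remove_edge S x z) z u ->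
  connect (remove_edge S x z) x (last u p) || connect (remove_edge S x z) z (last u p).
Proof.
elim: p u => [|v p IH] u //= /andP [huv hp] hc; apply: IH => //.
case hR: (remove_edge S x z u v).
  case/orP: hc => hc; apply/orP; [left|right]; apply: connect_trans hc _; exact: connect1.
move: hR; rewrite /remove_edge huv /= => /negbFE.
by case/orP => /andP [_ /eqP ->]; rewrite connect0 ?orbT.
Qed.

Lemma path_sub (T : rel V) p q u pth : path (remove_edge T p q) u pth ->
  u \in compX T p q -> path (subtree T (compX T p q)) u pth.
Proof.
elim: pth u => [|v pth IH] u //= /andP [huv hp] hu.
have hv : v \in compX T p q.
  move: hu; rewrite !inE => hu; apply: connect_trans hu _; exact: connect1.
rewrite IH // andbT /subtree hu hv !andbT; by case/andP: huv.
Qed.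

End H2.


Lemma fin_arith (m1 n1 m2 n2 m3 n3 m4 n4 : bool) (xa1 za1 xa2 za2 xb1 zb1 xb2 zb2 bx bz : nat) :
  xb1 + bz + xb2 <= xa1 + bx + xa2 ->
  za1 + bx + za2 < zb1 + bz + zb2 ->
  m1 /\ za1 = xa1.+1 \/ n1 /\ xa1 = za1.+1 ->
  m2 /\ za2 = xa2.+1 \/ n2 /\ xa2 = za2.+1 ->
  m3 /\ zb1 = xb1.+1 \/ n3 /\ xb1 = zb1.+1 ->
  m4 /\ zb2 = xb2.+1 \/ n4 /\ xb2 = zb2.+1 ->
  [/\ m3, m4 & n1 || n2] \/ [/\ n1, n2 & m3 || m4].
Proof.
move=> Hm Hl.
case=> [[h1 d1]|[h1 d1]]; case=> [[h2 d2]|[h2 d2]];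
case=> [[h3 d3]|[h3 d3]]; case=> [[h4 d4]|[h4 d4]];
first [ by left; rewrite ?h1 ?h2 ?h3 ?h4 ?orbT
      | by right; rewrite ?h1 ?h2 ?h3 ?h4 ?orbT
      | exfalso; lia ].
Qed.

Theorem lemma1 (V : finType) (G T : rel V) (p q : V)
  (gsel : V -> (V * V) * (V * V)) (x z : V) :
  simple_graph G ->
  two_edge_connected G ->
  spanning_tree G T ->
  T p q ->
  (* gsel x = (g_x, g'_x) is a maximizer of phi_x over S_e x S_e, for x in X *)
  (forall y, y \in compX T p q ->
     [/\ is_swap G T p q (gsel y).1, is_swap G T p q (gsel y).2 &
         forall g g', is_swap G T p q g -> is_swap G T p q g' ->
           phi T y g g' <= phi T y (gsel y).1 (gsel y).2]) ->
  subtree T (compX T p q) x z ->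
  phi T z (gsel x).1 (gsel x).2 < phi T z (gsel z).1 (gsel z).2 ->
  let X := compX T p q in
  let Ux := compU T X x z in
  let Uz := compU T X z x in
  let ax := (gsel x).1.1 in let ax' := (gsel x).2.1 in
  let az := (gsel z).1.1 in let az' := (gsel z).2.1 in
  ([/\ az \in Ux, az' \in Ux & (ax \in Uz) || (ax' \in Uz)])
  \/
  ([/\ ax \in Uz, ax' \in Uz & (az \in Ux) || (az' \in Ux)]).
Proof.
move=> [symG irrG] _ [symT [subTG [conT acT]]] Tpq Hsel Hxz Hlt; cbv zeta.
case/and3P: (Hxz) => Txz hxX hzX.
have Tzx : T z x by rewrite symT.
have hxz : x != z.
  by apply/eqP => e; move: (subTG _ _ Txz); rewrite e irrG.
have hR0 := sym_connect_sym (remove_edge_sym symT p q).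
set S := subtree T (compX T p q).
have key : forall a, a \in compX T p q ->
  (a \in compU T (compX T p q) x z /\ dist T z a = (dist T x a).+1) \/
  (a \in compU T (compX T p q) z x /\ dist T x a = (dist T z a).+1).
  move=> a ha.
  have hxa : connect (remove_edge T p q) x a.
    rewrite inE in hxX; rewrite inE in ha.
    by apply: connect_trans ha; rewrite hR0.
  case/connectP: hxa => pth hpth hl.
  have hS := path_sub hpth hxX.
  have := comp_walk (x:=x) (z:=z) hS; rewrite connect0 -hl => /(_ isT) /orP [h|h].
    left; split; first by rewrite /compU inE ha h.
    apply: dist_side => //.
      apply: connect_sub h => u v hr; apply: connect1.
      by move: hr; rewrite /remove_edge /S /subtree => /andP [/and3P [-> _ _] ->].
    exact: no_cycle.
  have h' : connect (remove_edge S z x) z a.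
    rewrite -(@eq_connect _ (remove_edge S x z)) // => u v.
    rewrite /remove_edge.
    by case: (u == x); case: (v == z); case: (u == z); case: (v == x); rewrite /= ?andbT ?andbF.
  right; split; first by rewrite /compU inE ha h'.
  apply: dist_side => //.
    apply: connect_sub h' => u v hr; apply: connect1.
    by move: hr; rewrite /remove_edge /S /subtree => /andP [/and3P [-> _ _] ->].
  by apply: no_cycle; rewrite // eq_sym.
case: (Hsel x hxX) => swx1 swx2 _.
case: (Hsel z hzX) => swz1 swz2 maxz.
case: (Hsel x hxX) => _ _ maxx.
have Hm := maxx _ _ swz1 swz2.
rewrite /phi in Hm Hlt.
have inX : forall g, is_swap G T p q g -> g.1 \in compX T p q.
  by move=> g /and4P [].
have s1 := dist_sym symT (conT (gsel x).2.1 x) (conT x (gsel x).2.1).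
have s2 := dist_sym symT (conT (gsel x).2.1 z) (conT z (gsel x).2.1).
have s3 := dist_sym symT (conT (gsel z).2.1 x) (conT x (gsel z).2.1).
have s4 := dist_sym symT (conT (gsel z).2.1 z) (conT z (gsel z).2.1).
move: (key _ (inX _ swx1)) (key _ (inX _ swx2)) (key _ (inX _ swz1)) (key _ (inX _ swz2)).
move: Hm Hlt s1 s2 s3 s4.
generalize ((gsel x).1.1 \in compU T (compX T p q) x z) ((gsel x).1.1 \in compU T (compX T p q) z x)
  ((gsel x).2.1 \in compU T (compX T p q) x z) ((gsel x).2.1 \in compU T (compX T p q) z x)
  ((gsel z).1.1 \in compU T (compX T p q) x z) ((gsel z).1.1 \in compU T (compX T p q) z x)
  ((gsel z).2.1 \in compU T (compX T p q) x z) ((gsel z).2.1 \in compU T (compX T p q) z x).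
move=> m1 n1 m2 n2 m3 n3 m4 n4 Hm Hlt s1 s2 s3 s4.
rewrite s1 s2 s3 s4 in Hm Hlt.
move: Hm Hlt. exact: (@fin_arith m1 n1 m2 n2 m3 n3 m4 n4 (dist T x (gsel x).1.1) (dist T z (gsel x).1.1) (dist T x (gsel x).2.1) (dist T z (gsel x).2.1) (dist T x (gsel z).1.1) (dist T z (gsel z).1.1) (dist T x (gsel z).2.1) (dist T z (gsel z).2.1) (dist T (gsel x).1.2 (gsel x).2.2) (dist T (gsel z).1.2 (gsel z).2.2)).
Qed.
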